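(* For every finite ordered graph $(G,<)$, the order $\prec_B$ is a breadth-first traversal of $G$.
   Context: A finite ordered graph $(G,<)$ is a finite undirected graph with a linear order on its vertices. The canonical breadth-first order $\prec_B$: for vertices $v,w$ let $v_0,w_0$ be the $<$-least vertices of the connected components of $v$ and $w$. Let $<^\star$ be the order on finite sequences of vertices comparing first by length and then lexicographically with respect to $<$. Let $\vec v$ be the $<^\star$-least path from $v_0$ to $v$ (similarly $\vec w$). Then: if $v_0\neq w_0$, $v\prec_B w$ iff $v_0<w_0$; if $v_0=w_0$, $v\prec_B w$ iff $\vec v<^\star\vec w$. A linear order $\prec$ of the vertex set, listing vertices $v_1\prec\dots\prec v_n$, is a breadth-first traversal if for each $i\ge2$, whenever some $v_j$ with $j<i$ has a neighbour outside $\{v_1,\dots,v_{i-1}\}$, $v_i$ is adjacent to $v_{j^*}$ for the least such $j^*$ (i.e. a visiting order of breadth-first search). Equivalently: for all $u\prec v\prec w$ with $u,w$ adjacent, $v$ has a neighbour $x$ with $x\prec v$ and $x\preceq u$. *)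

(* Defs.v *)
From mathcomp Require Import all_boot all_order.
Set Implicit Arguments. Unset Strict Implicit. Unset Printing Implicit Defensive.
Import Order.TTheory.
Local Open Scope order_scope.

(* A finite ordered graph: vertex type T : finOrderType d (a finite type with a
   linear order <), adjacency e : rel T assumed symmetric (undirected). *)

Section Defs.
Context {d : Order.disp_t} {T : finOrderType d}.

Fixpoint lexlt (s t : seq T) : bool :=
  match s, t with
  | [::], [::] => false
  | [::], _ :: _ => true
  | _ :: _, [::] => false
  | x :: s', y :: t' => (x < y) || ((x == y) && lexlt s' t')
  end.

Definition ltstar (s t : seq T) : bool :=
  (size s < size t)%N || ((size s == size t) && lexlt s t).

Definition is_walk (e : rel T) (a b : T) (p : seq T) : bool :=
  match p with
  | [::] => false
  | x :: q => [&& x == a, path e x q & last x q == b]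
  end.

Definition least_walk (e : rel T) (a b : T) (p : seq T) : Prop :=
  is_walk e a b p /\ forall q, is_walk e a b q -> q != p -> ltstar p q.

Definition comp_root (e : rel T) (v r : T) : Prop :=
  connect e r v /\ forall w, connect e w v -> r <= w.

Definition precB (e : rel T) (v w : T) : Prop :=
  exists v0 w0, [/\ comp_root e v v0, comp_root e w w0 &
    (v0 <> w0 /\ v0 < w0) \/
    (v0 = w0 /\ exists p q, [/\ least_walk e v0 v p, least_walk e w0 w q & ltstar p q])].

(* lt is a (strict) linear order on T that is a breadth-first traversal:
   whenever some vertex u before v has a neighbour not before v, v is adjacent
   to the lt-least such u. *)
Definition has_outside_nb (e : rel T) (lt : T -> T -> Prop) (v u : T) : Prop :=
  exists x, e u x /\ ~ lt x v.

Definition bf_traversal (e : rel T) (lt : T -> T -> Prop) : Prop :=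
  [/\ (forall v, ~ lt v v),
      (forall u v w, lt u v -> lt v w -> lt u w),
      (forall u v, u <> v -> lt u v \/ lt v u) &
      forall v u, lt u v -> has_outside_nb e lt v u ->
        exists2 us, lt us v /\ has_outside_nb e lt v us &
          (forall u', lt u' v -> has_outside_nb e lt v u' -> us = u' \/ lt us u')
          /\ e us v].

End Defs.

(* Main.v *)
Require Import Defs.
From mathcomp Require Import all_boot all_order.
From Stdlib Require Import FunctionalExtensionality PropExtensionality.
Set Implicit Arguments. Unset Strict Implicit. Unset Printing Implicit Defensive.
Import Order.TTheory.
Local Open Scope order_scope.

Section L.
Context {d : Order.disp_t} {T : finOrderType d}.
Implicit Types (s t u : seq T) (x y z : T).

Lemma lexlt_irr s : ~~ lexlt s s.
Proof. by elim: s => //= x s IH; rewrite ltxx eqxx /= (negbTE IH). Qed.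

Lemma lexlt_trans s t u : lexlt s t -> lexlt t u -> lexlt s u.
Proof.
elim: s t u => [|x s IH] [|y t] [|z u] //=.
case/orP=> [xy|/andP[/eqP-> st]]; case/orP=> [yz|/andP[/eqP<- tu]].
- by rewrite (lt_trans xy yz).
- by rewrite xy.
- by rewrite yz.
- by rewrite eqxx (IH _ _ st tu) orbT.
Qed.

Lemma lexlt_total s t : s != t -> lexlt s t || lexlt t s.
Proof.
elim: s t => [|x s IH] [|y t] //= H.
case: (ltgtP x y) => //= xy; subst y.
by apply: IH; apply: contraNneq H => ->.
Qed.

Lemma lexlt_rcons_inv s t a b : size s = size t ->
  lexlt (rcons s a) (rcons t b) -> lexlt s t \/ s = t.
Proof.
elim: s t => [|x s IH] [|y t] //=; first by right.
move=> /eqP; rewrite eqSS => /eqP /IH {}IH.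
case/orP=> [->|/andP[/eqP-> /IH[->|->]]]; first by left.
- by left; rewrite eqxx orbT.
- by right.
Qed.

Lemma ltstar_irr s : ~~ ltstar s s.
Proof. by rewrite /ltstar ltnn eqxx /= lexlt_irr. Qed.

Lemma ltstar_trans s t u : ltstar s t -> ltstar t u -> ltstar s u.
Proof.
rewrite /ltstar => /orP[st|/andP[/eqP st lst]] /orP[tu|/andP[/eqP tu ltu]].
- by rewrite (ltn_trans st tu).
- by rewrite -tu st.
- by rewrite st tu.
- by rewrite st tu eqxx (lexlt_trans lst ltu) orbT.
Qed.

Lemma ltstar_total s t : s != t -> ltstar s t || ltstar t s.
Proof.
move=> H; rewrite /ltstar; case: (ltngtP (size s) (size t)) => //= E.
exact: lexlt_total.
Qed.

Lemma ltstar_rcons_inv s t a b :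
  ltstar (rcons s a) (rcons t b) -> ltstar s t \/ s = t.
Proof.
rewrite /ltstar !size_rcons ltnS eqSS => /orP[->|/andP[/eqP E L]]; first by left.
case: (lexlt_rcons_inv E L) => [L'|->]; last by right.
by left; rewrite E eqxx L' orbT.
Qed.

Lemma ltstar_rcons s a : ltstar s (rcons s a).
Proof. by rewrite /ltstar size_rcons ltnSn. Qed.

End L.

Lemma ex_min (I : finType) (lt : rel I) (P : pred I) :
  irreflexive lt -> transitive lt -> (exists x, P x) ->
  exists x, P x /\ forall y, P y -> ~~ lt y x.
Proof.
move=> irr tr [x0 Px0].
pose f x := #|[pred y | lt y x && P y]|.
case: (arg_minnP f Px0) => x Px Hmin; exists x; split => // y Py.
apply/negP => lyx; have := Hmin y Py; rewrite leqNgt => /negP; apply.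
apply: proper_card; apply/properP; split.
  by apply/subsetP => z; rewrite !inE => /andP[lzy ->]; rewrite (tr _ _ _ lzy lyx).
by exists y; rewrite !inE ?lyx ?Py ?irr.
Qed.

Section G.
Context {d : Order.disp_t} {T : finOrderType d} (e : rel T).
Implicit Types (s t u : seq T) (a b c x y z : T).

Lemma walk_rcons a b c p : is_walk e a b p -> e b c -> is_walk e a c (rcons p c).
Proof.
case: p => [|x q] //= /and3P[xa pq /eqP lq] ebc.
by rewrite xa rcons_path pq lq ebc last_rcons eqxx.
Qed.

Lemma walk_last a b p : is_walk e a b p -> last a p = b.
Proof. by case: p => [|x q] //= /and3P[/eqP-> _ /eqP]. Qed.

Lemma walk_nil_not_lt a b p : is_walk e a b p -> ~~ ltstar p [:: a].
Proof.
case: p => [|x q] //= /and3P[/eqP-> _ _].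
by case: q => [|y q]; rewrite /ltstar /= ?ltxx ?eqxx.
Qed.


Lemma least_uniq a b p q : least_walk e a b p -> least_walk e a b q -> p = q.
Proof.
move=> [wp Hp] [wq Hq]; case: (eqVneq p q) => // npq.
have qp : q != p by rewrite eq_sym.
by have := ltstar_trans (Hq _ wp npq) (Hp _ wq qp); rewrite (negbTE (ltstar_irr _)).
Qed.

Lemma least_prefix a c p : least_walk e a c (rcons p c) -> p != [::] ->
  least_walk e a (last a p) p /\ e (last a p) c.
Proof.
case: p => [|x q] // [w H] _; move: w => /= /and3P[xa]; rewrite rcons_path.
case/andP=> pq elc _.
have wp : is_walk e a (last a (x :: q)) (x :: q) by rewrite /= xa pq (eqP xa) eqxx.
have elc' : e (last a (x :: q)) c by rewrite /= (eqP xa) in elc *.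
split => //; split => // q' wq' nq'.
have := H _ (walk_rcons wq' elc').
have nr : rcons q' c != rcons (x :: q) c.
  by apply: contra nq' => /eqP /rcons_inj [->].
move=> /(_ nr) L.
by case: (ltstar_rcons_inv L) => // E; rewrite E eqxx in nq'.
Qed.

Lemma least_exists a b : connect e a b -> exists p, least_walk e a b p.
Proof.
move=> /connectP [p0 pp0 lp0].
pose P n := [exists t : n.-tuple T, is_walk e a b t].
have exP : exists n, P n.
  exists (size (a :: p0)); apply/existsP; exists (in_tuple (a :: p0)).
  by rewrite /= eqxx pp0 lp0 eqxx.
case: (ex_minnP exP) => n /existsP [t0 wt0] Hmin.
pose lt := fun s t : n.-tuple T => lexlt s t.
have irr : irreflexive lt by move=> s; apply/negbTE/lexlt_irr.
have tr : transitive lt by move=> s' s t h1 h2; apply: lexlt_trans h1 h2.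
have [t [wt Ht]] := ex_min (P := fun t : n.-tuple T => is_walk e a b t) irr tr (ex_intro _ t0 wt0).
exists t; split => // q wq nq.
have : P (size q) by apply/existsP; exists (in_tuple q).
move=> /Hmin; rewrite leq_eqVlt => /orP [/eqP E|L'].
- have tq : size q == n by rewrite E.
  have := Ht (Tuple tq) wq; rewrite /lt /= => nl.
  have := ltstar_total nq; rewrite /ltstar (size_tuple t) (eqP tq) ltnn eqxx /=.
  by rewrite (negbTE nl).
- by rewrite /ltstar size_tuple L'.
Qed.
End G.

Section H.
Context {d : Order.disp_t} {T : finOrderType d} (e : rel T).
Hypothesis sym : symmetric e.

Lemma root_exists v : exists r, comp_root e v r.
Proof.
have irr : irreflexive (fun x y : T => x < y) by move=> x; exact: ltxx.
have tr : transitive (fun x y : T => x < y) by move=> x y z; exact: lt_trans.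
have [r [cr Hr]] := ex_min (P := fun w => connect e w v) irr tr (ex_intro _ v (connect0 e v)).
by exists r; split => // w /Hr; rewrite leNgt.
Qed.

Lemma root_uniq v r1 r2 : comp_root e v r1 -> comp_root e v r2 -> r1 = r2.
Proof. by move=> [c1 H1] [c2 H2]; apply: le_anti; rewrite H1 // H2. Qed.

Variables (rt : T -> T) (pw : T -> seq T).
Hypothesis Hrt : forall v, comp_root e v (rt v).
Hypothesis Hpw : forall v, least_walk e (rt v) v (pw v).

Definition ltB v w := (rt v < rt w) || ((rt v == rt w) && ltstar (pw v) (pw w)).

Lemma precBE v w : precB e v w <-> ltB v w.
Proof.
split.
  case=> v0 [w0 [rv rw H]].
  have E1 := root_uniq rv (Hrt v); have E2 := root_uniq rw (Hrt w).
  subst v0 w0; rewrite /ltB.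
  case: H => [[_ ->] //|[E [p [q [lp lq L]]]]].
  rewrite E eqxx -(least_uniq lp (Hpw v)) -(least_uniq lq (Hpw w)) L.
  by rewrite orbT.
rewrite /ltB => /orP [L|/andP [/eqP E L]].
  exists (rt v), (rt w); split => //; left; split => //.
  by move=> E; rewrite E ltxx in L.
exists (rt v), (rt w); split => //; right; split => //.
exists (pw v), (pw w); split => //; rewrite E; exact: Hpw.
Qed.

Lemma rt_edge u w : e u w -> rt u = rt w.
Proof.
move=> euw.
have [cu Hu] := Hrt u; have [cw Hw] := Hrt w.
apply: le_anti; apply/andP; split.
  by apply: Hu; apply: connect_trans cw (connect1 _); rewrite sym.
by apply: Hw; apply: connect_trans cu (connect1 _).
Qed.

Lemma pw_inj v w : pw v = pw w -> v = w.
Proof.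
move=> E; have [wv _] := Hpw v; have [ww _] := Hpw w.
rewrite E in wv; case: (pw w) wv ww => [|x q] //= /and3P[_ _ /eqP <-].
by case/and3P=> _ _ /eqP.
Qed.

Lemma ltB_irr v : ~~ ltB v v.
Proof. by rewrite /ltB ltxx eqxx /= ltstar_irr. Qed.

Lemma ltB_trans u v w : ltB u v -> ltB v w -> ltB u w.
Proof.
rewrite /ltB => /orP[L1|/andP[/eqP E1 L1]] /orP[L2|/andP[/eqP E2 L2]].
- by rewrite (lt_trans L1 L2).
- by rewrite -E2 L1.
- by rewrite E1 L2.
- by rewrite E1 E2 eqxx (ltstar_trans L1 L2) orbT.
Qed.

Lemma ltB_total u v : u != v -> ltB u v || ltB v u.
Proof.
move=> nuv; rewrite /ltB; case: (ltgtP (rt u) (rt v)) => //= E.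
apply: ltstar_total; apply: contra nuv => /eqP /pw_inj ->; by [].
Qed.

Lemma pw_split v : v != rt v ->
  exists y, [/\ e y v, rt y = rt v & pw v = rcons (pw y) v].
Proof.
move=> nv; have Hv := Hpw v; have [wv _] := Hv.
move: Hv wv; case E: (pw v) => [|x q] //= Hv /and3P[/eqP xa pq /eqP lq].
move: E Hv pq lq; case/lastP: q => [|q' z] E Hv pq lq.
  by move: nv; rewrite /= in lq; rewrite -{1}lq xa eqxx.
rewrite last_rcons in lq; subst z.
have Hv' : least_walk e (rt v) v (rcons (x :: q') v) by [].
have [Ly ey] := least_prefix Hv' isT.
exists (last (rt v) (x :: q')); have ry := rt_edge ey.
split => //.
have Ly' : least_walk e (rt (last (rt v) (x :: q'))) (last (rt v) (x :: q')) (x :: q').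
  by rewrite ry.
by rewrite (least_uniq (Hpw _) Ly').
Qed.

Lemma key u v w : ltB u v -> ltB v w -> e u w ->
  exists y, [/\ e y v, ltB y v & (y = u \/ ltB y u)].
Proof.
move=> Luv Lvw euw.
have ruw := rt_edge euw.
have le1 : rt u <= rt v.
  by move: Luv; rewrite /ltB => /orP[/ltW //|/andP[/eqP -> _]].
have le2 : rt v <= rt w.
  by move: Lvw; rewrite /ltB => /orP[/ltW //|/andP[/eqP -> _]].
have rvu : rt v = rt u by apply: le_anti; rewrite le1 ruw le2.
move: Luv Lvw; rewrite /ltB rvu -ruw ltxx eqxx /= => Luv Lvw.
have nv : v != rt v.
  apply/negP => /eqP vr.
  have wv1 : is_walk e (rt v) v [:: v] by rewrite /= -vr !eqxx.
  have [wv Hv] := Hpw v.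
  have pv1 : pw v = [:: v].
    case: (eqVneq (pw v) [:: v]) => // ne.
    by have := Hv _ wv1 (ltac:(by rewrite eq_sym)); rewrite {2}vr (negbTE (walk_nil_not_lt wv)).
  have [wu _] := Hpw u.
  by move: Luv; rewrite pv1 {1}vr rvu (negbTE (walk_nil_not_lt wu)).
have [y [eyv ryv pv]] := pw_split nv.
exists y; split => //.
  by rewrite /ltB ?ryv ?rvu eqxx pv ltstar_rcons orbT.
have wr : is_walk e (rt w) w (rcons (pw u) w).
  by rewrite -ruw; apply: walk_rcons euw; case: (Hpw u).
have L : ltstar (rcons (pw y) v) (rcons (pw u) w).
  rewrite -pv; case: (eqVneq (rcons (pw u) w) (pw w)) => [->|ne] //.
  by apply: ltstar_trans Lvw _; case: (Hpw w) => _ H; apply: H.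
case: (ltstar_rcons_inv L) => [L'|E].
  by right; rewrite /ltB ?ryv ?rvu eqxx L' orbT.
by left; apply: pw_inj.
Qed.

End H.

Local Close Scope order_scope.

Theorem lemma5 (d : Order.disp_t) (T : finOrderType d) (e : rel T) :
  symmetric e -> bf_traversal e (precB e).
Proof.
move=> sym.
have [rt Hrt] := fin_all_exists (root_exists e).
have exw : forall v, exists p, least_walk e (rt v) v p.
  by move=> v; apply: least_exists; case: (Hrt v).
have [pw Hpw] := fin_all_exists exw.
have -> : precB e = fun v w => ltB rt pw v w.
  apply: functional_extensionality => v; apply: functional_extensionality => w.
  by apply: propositional_extensionality; apply: precBE.
have tot : forall u v, u != v -> ltB rt pw u v || ltB rt pw v u.
  move=> u v; exact: (ltB_total Hpw).
have irr : irreflexive (ltB rt pw) by move=> v; apply/negbTE/ltB_irr.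
have tr : transitive (ltB rt pw) by move=> x y z h1 h2; apply: ltB_trans h1 h2.
split.
- by move=> v; rewrite irr.
- by move=> u v w; apply: ltB_trans.
- by move=> u v /eqP /tot /orP.
move=> v u Luv [x [eux nxv]].
pose P z := ltB rt pw z v && [exists x, e z x && ~~ ltB rt pw x v].
have [us [Pus Hus]] : exists us, P us /\ forall y, P y -> ~~ ltB rt pw y us.
  apply: ex_min irr tr _; exists u; rewrite /P Luv /=; apply/existsP; exists x.
  by rewrite eux; apply/negP.
have Hmin : forall u', ltB rt pw u' v -> has_outside_nb e (fun v w => ltB rt pw v w) v u' ->
    us = u' \/ ltB rt pw us u'.
  move=> u' L' [x' [e' n']].
  have Pu' : P u' by rewrite /P L' /=; apply/existsP; exists x'; rewrite e'; apply/negP.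
  case: (eqVneq us u') => [|ne]; first by left.
  by move: (tot _ _ ne); rewrite (negbTE (Hus _ Pu')) orbF; right.
move: Pus; rewrite /P => /andP [Lus /existsP [y /andP [euy nyv]]].
exists us; first by split => //; exists y; split => //; apply/negP.
split => //.
case: (eqVneq y v) => [<- //|nyv'].
have Lvy : ltB rt pw v y.
  by move: (tot _ _ nyv'); rewrite (negbTE nyv).
have [z [ezv Lzv Hz]] := key sym Hrt Hpw Lus Lvy euy.
have Pz : P z.
  by rewrite /P Lzv /=; apply/existsP; exists v; rewrite ezv irr.
case: Hz => [E|Lzu]; first by subst z.
have Ho : has_outside_nb e (fun v w => ltB rt pw v w) v z.
  by exists v; split => //; rewrite irr.
case: (Hmin z Lzv Ho) => [E|L2].
- by subst z; rewrite irr in Lzu.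
- by have := tr _ _ _ Lzu L2; rewrite irr.
Qed.
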